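(* Let $(X,d)$ be a pointed metric space and let $((x_i,y_i))_{i\in I}$ be a Lipschitz interpolating family in $\widetilde X$ for $\mathrm{Lip}_0(X)$ with Lipschitz interpolation constant $M$. Assume that $(f_i)_{i\in I}$ is a Beurling set of functions in $\mathrm{Lip}_0(X)$ for $((x_i,y_i))_{i\in I}$. Then for every $\alpha=(\alpha_i)_{i\in I}\in\ell_\infty(I)$ the series $\sum_{i\in I}\alpha_i f_i(x)$ converges for every $x\in X$, and the map $R:\ell_\infty(I)\to\mathrm{Lip}_0(X)$, $R(\alpha)=\sum_{i\in I}\alpha_i f_i$, is a well-defined bounded linear operator with $\|R\|=M$ and $T\circ R=\mathrm{Id}_{\ell_\infty(I)}$, where $T$ is the Lipschitz interpolating operator of the family.
   Context: All spaces are real. $(X,d)$ is a metric space with base point $0$, $\widetilde{X}=\{(x,y)\in X\times X: x\neq y\}$. $\mathrm{Lip}_0(X)$ is the Banach space of Lipschitz $f:X\to\mathbb{R}$ with $f(0)=0$, normed by $\|f\|=\sup_{(x,y)\in\widetilde X}|f(x)-f(y)|/d(x,y)$. For a family $((x_i,y_i))_{i\in I}$ in $\widetilde X$, its Lipschitz interpolating operator is $T:\mathrm{Lip}_0(X)\to\ell_\infty(I)$, $T(f)=\big((f(x_i)-f(y_i))/d(x_i,y_i)\big)_{i\in I}$; the family is Lipschitz interpolating for $\mathrm{Lip}_0(X)$ if $T$ is surjective, and then its Lipschitz interpolation constant is $M=\inf\{K\geq 1: \forall \alpha\in\ell_\infty(I), \|\alpha\|_\infty\le1,\ \exists f\in\mathrm{Lip}_0(X),\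 \|f\|\le K,\ T(f)=\alpha\}$. A Beurling set of functions in $\mathrm{Lip}_0(X)$ for such a family (with constant $M$) is a family $(f_i)_{i\in I}$ of functions $f_i:X\to\mathbb R$ with $f_i(0)=0$ for all $i$, $(f_i(x_j)-f_i(y_j))/d(x_j,y_j)=\delta_{ij}$ (Kronecker delta) for all $i,j\in I$, and $\sup_{(x,y)\in\widetilde X}\sum_{i\in I}|f_i(x)-f_i(y)|/d(x,y)\leq M$. *)

(* Defs.v *)
From HB Require Import structures.
From mathcomp Require Import all_boot all_order all_algebra.
From mathcomp Require Import all_classical all_reals all_analysis.
Set Implicit Arguments. Unset Strict Implicit. Unset Printing Implicit Defensive.
Import Order.TTheory GRing.Theory Num.Theory.
Local Open Scope classical_set_scope.
Local Open Scope ring_scope.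

Section Defs.
Variables (R : realType) (X : Type).

Definition is_metric (d : X -> X -> R) : Prop :=
  [/\ forall u v, 0 <= d u v,
      forall u v, d u v = 0 <-> u = v,
      forall u v, d u v = d v u &
      forall u v w, d u w <= d u v + d v w].

Definition is_Lip0 (d : X -> X -> R) (x0 : X) (f : X -> R) : Prop :=
  f x0 = 0 /\ exists L : R, forall u v, `|f u - f v| <= L * d u v.

Definition lip_norm (d : X -> X -> R) (f : X -> R) : R :=
  sup [set `|f p.1 - f p.2| / d p.1 p.2 | p in [set p : X * X | p.1 <> p.2]].

Variable I : choiceType.

Definition linf_bounded (a : I -> R) : Prop := exists C : R, forall i, `|a i| <= C.

Definition linf_norm (a : I -> R) : R := sup (range (fun i => `|a i|)).

Definition interp_op (d : X -> X -> R) (x y : I -> X) (f : X -> R) : I -> R :=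
  fun i => (f (x i) - f (y i)) / d (x i) (y i).

Definition lip_interpolating (d : X -> X -> R) (x0 : X) (x y : I -> X) : Prop :=
  (forall i, x i <> y i) /\
  forall a, linf_bounded a -> exists f, is_Lip0 d x0 f /\ interp_op d x y f = a.

Definition interp_constant (d : X -> X -> R) (x0 : X) (x y : I -> X) : R :=
  inf [set K : R | 1 <= K /\
         forall a, linf_bounded a -> linf_norm a <= 1 ->
           exists f, [/\ is_Lip0 d x0 f, lip_norm d f <= K & interp_op d x y f = a]].

Definition beurling (d : X -> X -> R) (x0 : X) (x y : I -> X) (M : R)
    (f : I -> X -> R) : Prop :=
  [/\ forall i, f i x0 = 0,
      forall i j, (f i (x j) - f i (y j)) / d (x j) (y j) = (if i == j then 1 else 0) &
      forall u v, u <> v ->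
        (\esum_(i in [set: I]) (`|f i u - f i v| / d u v)%:E <= M%:E)%E].

(* unconditional convergence of sum_{i in I} a i to s (net of finite partial sums) *)
Definition has_sum (a : I -> R) (s : R) : Prop :=
  forall e : R, 0 < e -> exists F0 : set I, finite_set F0 /\
    forall F : set I, finite_set F -> F0 `<=` F -> `|\sum_(i \in F) a i - s| < e.

Definition op_norm (d : X -> X -> R) (Rop : (I -> R) -> X -> R) : R :=
  sup [set lip_norm d (Rop a) | a in [set a | linf_bounded a /\ linf_norm a <= 1]].

End Defs.

(* Main.v *)
Require Import Defs.
From HB Require Import structures.
From mathcomp Require Import all_boot all_order all_algebra.
From mathcomp Require Import all_classical all_reals all_analysis.
From mathcomp Require Import ring lra.
Import Order.TTheory GRing.Theory Num.Theory.
Local Open Scope classical_set_scope.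
Local Open Scope ring_scope.
Set Implicit Arguments. Unset Strict Implicit.

Section H.
Variables (R : realType) (I : choiceType).
Implicit Types (a b g : I -> R) (F G : set I).

Lemma fs_split g F G : finite_set G -> F `<=` G ->
  \sum_(i \in G) g i = \sum_(i \in F) g i + \sum_(i \in G `\` F) g i.
Proof.
move=> fG FG; rewrite -{1}(setDUK FG) fsbigU0 //.
- exact: sub_finite_set fG.
- exact: finite_setD.
- by move=> i [Fi [_ nFi]].
Qed.

Lemma fs_mono g F G : (forall i, 0 <= g i) -> finite_set G -> F `<=` G ->
  \sum_(i \in F) g i <= \sum_(i \in G) g i.
Proof.
move=> g0 fG FG; rewrite (fs_split g fG FG) lerDl; exact: fsumr_ge0.
Qed.

Lemma fs_le a b F : finite_set F -> (forall i, a i <= b i) ->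
  \sum_(i \in F) a i <= \sum_(i \in F) b i.
Proof. by move=> fF ab; rewrite !fsbig_finite //; apply: ler_sum. Qed.

Lemma fs_norm a F : finite_set F -> `|\sum_(i \in F) a i| <= \sum_(i \in F) `|a i|.
Proof. by move=> fF; rewrite !fsbig_finite //; apply: ler_norm_sum. Qed.

Lemma fs_add a b F : finite_set F ->
  \sum_(i \in F) (a i + b i) = \sum_(i \in F) a i + \sum_(i \in F) b i.
Proof. by move=> fF; rewrite fsbig_split. Qed.

Lemma hs_unique a s t : has_sum a s -> has_sum a t -> s = t.
Proof.
move=> hs ht; apply/eqP; apply/negPn/negP => st.
have e0 : 0 < `|s - t| / 2 by rewrite divr_gt0 // normr_gt0 subr_eq0.
have [F1 [f1 H1]] := hs _ e0; have [F2 [f2 H2]] := ht _ e0.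
have fU : finite_set (F1 `|` F2) by rewrite finite_setU.
have := H1 _ fU (@subsetUl _ F1 F2); have := H2 _ fU (@subsetUr _ F1 F2).
set S := \sum_(i \in _) a i => h2 h1.
have : `|s - t| <= `|S - s| + `|S - t|.
  by rewrite (_ : s - t = - (S - s) + (S - t)); [apply: le_trans (ler_normD (- (S - s)) (S - t)) _; rewrite normrN | ring].
lra.
Qed.

Lemma hs_add a b s t : has_sum a s -> has_sum b t ->
  has_sum (fun i => a i + b i) (s + t).
Proof.
move=> hs ht e e0; have e2 : 0 < e / 2 by rewrite divr_gt0.
have [F1 [f1 H1]] := hs _ e2; have [F2 [f2 H2]] := ht _ e2.
exists (F1 `|` F2); split; first by rewrite finite_setU.
move=> F fF sF; rewrite fs_add //.
have h1 := H1 _ fF (subset_trans (@subsetUl _ F1 F2) sF).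
have h2 := H2 _ fF (subset_trans (@subsetUr _ F1 F2) sF).
set A := \sum_(i \in F) a i in h1 *; set B := \sum_(i \in F) b i in h2 *.
have : `|A + B - (s + t)| <= `|A - s| + `|B - t|.
  by rewrite (_ : A + B - (s + t) = (A - s) + (B - t)); [rewrite ler_normD | ring].
lra.
Qed.

Lemma hs_scale a s c : has_sum a s -> has_sum (fun i => c * a i) (c * s).
Proof.
move=> hs e e0; have e2 : 0 < e / (`|c| + 1) by rewrite divr_gt0 // ltr_wpDl.
have [F1 [f1 H1]] := hs _ e2; exists F1; split => // F fF sF.
rewrite -mulr_fsumr -mulrBr normrM.
have h := H1 _ fF sF.
have c0 : 0 <= `|c| by [].
have : `|c| * `|\sum_(i \in F) a i - s| <= `|c| * (e / (`|c| + 1)).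
  by rewrite ler_wpM2l // ltW.
have : `|c| * (e / (`|c| + 1)) < e.
  rewrite mulrA ltr_pdivrMr ?ltr_wpDl //; nra.
lra.
Qed.

Lemma hs_ext a b s : (forall i, a i = b i) -> has_sum a s -> has_sum b s.
Proof. by move=> ab; rewrite (_ : a = b) //; apply: funext. Qed.

Lemma hs_bound a s K : has_sum a s ->
  (forall F, finite_set F -> `|\sum_(i \in F) a i| <= K) -> `|s| <= K.
Proof.
move=> hs hK; apply/ler_addgt0Pr => e e0.
have [F [fF H]] := hs _ e0; have h := H _ fF (@subset_refl _ F).
have := hK _ fF.
set S := \sum_(i \in F) a i in h *.
have : `|s| <= `|S| + `|S - s|.
  by rewrite {1}(_ : s = S - (S - s)); [apply: ler_normB | ring].
lra.
Qed.

Lemma hs_delta g i : (forall j, j != i -> g j = 0) -> has_sum g (g i).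
Proof.
move=> gi e e0; exists [set i]; split; first exact: finite_set1.
move=> F fF sF; rewrite (fsbigD1 i) //; last exact: sF.
rewrite fsbig1; last by move=> j [_ /eqP ji]; exact: gi.
by rewrite /= addr0 subrr normr0.
Qed.

Lemma hs_zero : has_sum (fun _ : I => 0 : R) 0.
Proof.
move=> e e0; exists set0; split; first exact: finite_set0.
by move=> F _ _; rewrite fsbig1 // subrr normr0.
Qed.

Lemma hs_nonneg g C : (forall i, 0 <= g i) ->
  (forall F, finite_set F -> \sum_(i \in F) g i <= C) ->
  exists s, has_sum g s.
Proof.
move=> g0 hC.
set E := [set \sum_(i \in F) g i | F in finite_set].
have hE : has_sup E.
  split; first by exists 0, set0; [exact: finite_set0 | rewrite fsbig_set0].
  by exists C => _ [F fF <-]; exact: hC.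
exists (sup E) => e e0.
have [_ [F0 fF0 <-] H0] := sup_adherent e0 hE.
exists F0; split => // F fF sF.
have h1 := fs_mono g0 fF sF.
have h2 : \sum_(i \in F) g i <= sup E by apply: ub_le_sup; [case: hE | exists F].
rewrite ltr_norml; apply/andP; split; lra.
Qed.

Lemma hs_exist b C : (forall F, finite_set F -> \sum_(i \in F) `|b i| <= C) ->
  exists s, has_sum b s.
Proof.
move=> hC.
pose p i := Num.max (b i) 0; pose n i := Num.max (- b i) 0.
have p0 i : 0 <= p i by rewrite /p le_max lexx orbT.
have n0 i : 0 <= n i by rewrite /n le_max lexx orbT.
have pb i : p i <= `|b i| by rewrite /p ge_max normr_ge0 ler_norm.
have nb i : n i <= `|b i| by rewrite /n ge_max normr_ge0 -normrN ler_norm.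
have [sp hp] : exists s, has_sum p s.
  apply: (hs_nonneg (C := C)) => // F fF; apply: le_trans (hC _ fF).
  exact: fs_le.
have [sn hn] : exists s, has_sum n s.
  apply: (hs_nonneg (C := C)) => // F fF; apply: le_trans (hC _ fF).
  exact: fs_le.
exists (sp + (-1) * sn); apply: hs_ext (hs_add hp (hs_scale (-1) hn)) => i.
rewrite /p /n mulN1r; case: (leP 0 (b i)) => hb.
  by rewrite max_r ?subr0 // oppr_le0.
by rewrite max_l ?sub0r ?opprK // oppr_ge0 ltW.
Qed.

End H.

Theorem theorem3p9 (R : realType) (X : Type) (d : X -> X -> R) (x0 : X)
    (I : choiceType) (x y : I -> X) (M : R) (f : I -> X -> R) :
  is_metric d ->
  (exists i : I, True) ->
  lip_interpolating d x0 x y ->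
  M = interp_constant d x0 x y ->
  beurling d x0 x y M f ->
  exists Rop : (I -> R) -> X -> R,
    (forall a, linf_bounded a -> forall z, has_sum (fun i => a i * f i z) (Rop a z)) /\
    (forall a, linf_bounded a -> is_Lip0 d x0 (Rop a)) /\
    (forall a b, linf_bounded a -> linf_bounded b ->
          Rop (fun i => a i + b i) = (fun z => Rop a z + Rop b z)) /\
    (forall (c : R) a, linf_bounded a ->
          Rop (fun i => c * a i) = (fun z => c * Rop a z)) /\
    (exists C : R, forall a, linf_bounded a -> lip_norm d (Rop a) <= C * linf_norm a) /\
    op_norm d Rop = M /\
    (forall a, linf_bounded a -> interp_op d x y (Rop a) = a).
Proof.
move=> [d0 dE dsym dtri] [i0 _] [xy _] HM [fx0 fdelta fsum].
have dpos u v : u <> v -> 0 < d u v.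
  move=> uv; rewrite lt_def d0 andbT; apply/eqP => /dE; exact: uv.
have PB u v : u <> v -> forall F, finite_set F ->
    \sum_(i \in F) (`|f i u - f i v| / d u v) <= M.
  move=> uv F fF; rewrite -lee_fin -fsumEFin //.
  apply: le_trans _ (fsum u v uv); apply: esum_ge; exists F => //; split => //.
have M0 : 0 <= M by have := PB _ _ (xy i0) _ (finite_set0 I); rewrite fsbig_set0.
have NB (a : I -> R) : linf_bounded a -> forall i, `|a i| <= linf_norm a.
  move=> [C hC] i; apply: ub_le_sup; last by exists i.
  by exists C => _ [j _ <-]; exact: hC.
have N0 (a : I -> R) : linf_bounded a -> 0 <= linf_norm a.
  by move=> ha; exact: (le_trans (normr_ge0 (a i0)) (NB a ha i0)).
have PB2 (a : I -> R) : linf_bounded a -> forall u v F, finite_set F ->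
    \sum_(i \in F) `|a i * f i u - a i * f i v| <= linf_norm a * M * d u v.
  move=> ha u v F fF; case: (pselect (u = v)) => [<-|uv].
    rewrite fsbig1 => [|i _]; last by rewrite subrr normr0.
    by rewrite !mulr_ge0 // N0.
  apply: le_trans (fs_le (b := fun i => linf_norm a * d u v * (`|f i u - f i v| / d u v)) fF _) _.
    move=> i; rewrite -mulrBr normrM -mulrA [d u v * _]mulrC divfK; last first.
      by rewrite gt_eqF // dpos.
    by rewrite ler_wpM2r // NB.
  rewrite -mulr_fsumr [_ * M * _]mulrAC ler_wpM2l //; last exact: PB.
  by rewrite mulr_ge0 // N0.
have PBabs (a : I -> R) : linf_bounded a -> forall z F, finite_set F ->
    \sum_(i \in F) `|a i * f i z| <= linf_norm a * M * d z x0.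
  move=> ha z F fF.
  rewrite (eq_fsbigr (fun i => `|a i * f i z - a i * f i x0|)); first exact: PB2.
  by move=> i _; rewrite fx0 mulr0 subr0.
pose Rop := fun a z => xget 0 [set s | has_sum (fun i => a i * f i z) s].
have HS (a : I -> R) : linf_bounded a -> forall z, has_sum (fun i => a i * f i z) (Rop a z).
  move=> ha z; apply: xgetPex; exact: hs_exist (PBabs a ha z).
have hs_sub (g h : I -> R) (s t : R) : has_sum g s -> has_sum h t ->
    has_sum (fun i => g i - h i) (s - t).
  move=> hg hh; have := hs_add hg (hs_scale (-1) hh).
  rewrite (_ : s - t = s + -1 * t); last by rewrite mulN1r.
  by apply: hs_ext => i; rewrite mulN1r.
have LIP (a : I -> R) : linf_bounded a -> forall u v,
    `|Rop a u - Rop a v| <= linf_norm a * M * d u v.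
  move=> ha u v; apply: hs_bound (hs_sub _ _ _ _ (HS a ha u) (HS a ha v)) _.
  by move=> F fF; apply: le_trans (fs_norm _ fF) _; exact: PB2.
have R0 (a : I -> R) : linf_bounded a -> Rop a x0 = 0.
  move=> ha; apply: hs_unique (HS a ha x0) (hs_ext _ (hs_zero I)) => i.
  by rewrite fx0 mulr0.
have LNub (a : I -> R) : linf_bounded a ->
   ubound [set `|Rop a p.1 - Rop a p.2| / d p.1 p.2 | p in [set p : X * X | p.1 <> p.2]]
     (linf_norm a * M).
  move=> ha _ [[u v] /= uv <-]; rewrite ler_pdivrMr ?dpos //; exact: LIP.
have LNle (a : I -> R) : linf_bounded a -> lip_norm d (Rop a) <= linf_norm a * M.
  move=> ha; apply: ge_sup; last exact: LNub.
  by exists (`|Rop a (x i0) - Rop a (y i0)| / d (x i0) (y i0)), (x i0, y i0) => //=; exact: xy.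
have INT (a : I -> R) : linf_bounded a -> interp_op d x y (Rop a) = a.
  move=> ha; apply: funext => i; rewrite /interp_op mulrC.
  have h := hs_scale (d (x i) (y i))^-1 (hs_sub _ _ _ _ (HS a ha (x i)) (HS a ha (y i))).
  have hd := @hs_delta R I (fun j => a j * (if j == i then 1 else 0)) i.
  rewrite eqxx mulr1 in hd.
  apply: hs_unique h (hs_ext _ (hd _)).
    move=> j; rewrite -(fdelta j i); ring.
  by move=> j /negbTE ->; rewrite mulr0.
pose dl := fun j => if j == i0 then 1 else 0 : R.
have hdl : linf_bounded dl by exists 1 => j; rewrite /dl; case: ifP; rewrite ?normr1 ?normr0.
have Ndl : linf_norm dl <= 1.
  apply: ge_sup; first by exists `|dl i0|, i0.
  by move=> _ [j _ <-]; rewrite /dl; case: ifP; rewrite ?normr1 ?normr0.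
have Ldl : 1 <= lip_norm d (Rop dl).
  have e1 : (Rop dl (x i0) - Rop dl (y i0)) / d (x i0) (y i0) = 1.
    by have := congr1 (fun g => g i0) (INT dl hdl); rewrite /interp_op /= {3}/dl eqxx.
  have e2 : `|Rop dl (x i0) - Rop dl (y i0)| / d (x i0) (y i0) = 1.
    by rewrite -[RHS]normr1 -e1 normrM normfV (ger0_norm (d0 _ _)).
  rewrite -[X in X <= _]e2; apply: (ub_le_sup (ex_intro _ _ (LNub dl hdl))).
  by exists (x i0, y i0) => //=; exact: xy.
have opUB : ubound [set lip_norm d (Rop a) | a in [set a | linf_bounded a /\ linf_norm a <= 1]] M.
  move=> _ [a [ha na] <-]; apply: le_trans (LNle a ha) _.
  have := N0 a ha; nra.
refine (ex_intro _ Rop _).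
refine (conj _ (conj _ (conj _ (conj _ (conj _ (conj _ _)))))).
- exact: HS.
- move=> a ha; split; first exact: R0.
  by exists (linf_norm a * M); exact: LIP.
- move=> a b ha hb.
  have hab : linf_bounded (fun i => a i + b i).
    case: ha => [Ca hCa]; case: hb => [Cb hCb]; exists (Ca + Cb) => i.
    exact: le_trans (ler_normD _ _) (lerD (hCa i) (hCb i)).
  apply: funext => z; apply: hs_unique (HS _ hab z) _.
  by apply: hs_ext (hs_add (HS a ha z) (HS b hb z)) => i; rewrite mulrDl.
- move=> c a ha.
  have hca : linf_bounded (fun i => c * a i).
    case: ha => [Ca hCa]; exists (`|c| * Ca) => i.
    by rewrite normrM ler_wpM2l.
  apply: funext => z; apply: hs_unique (HS _ hca z) _.
  by apply: hs_ext (hs_scale c (HS a ha z)) => i; rewrite mulrA.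
- by exists M => a ha; rewrite mulrC; exact: LNle.
- apply/eqP; rewrite eq_le; apply/andP; split.
    apply: ge_sup => //; by exists (lip_norm d (Rop dl)), dl.
  rewrite HM; apply: (ge_inf (ex_intro _ 1 _)).
    by move=> K [h1 _].
  split.
    apply: le_trans Ldl _; apply: (ub_le_sup (ex_intro _ _ opUB)).
    by exists dl.
  move=> a ha na; exists (Rop a); split.
  + split; first exact: R0.
    by exists (linf_norm a * M); exact: LIP.
  + by apply: (ub_le_sup (ex_intro _ _ opUB)); exists a.
  + exact: INT.
- exact: INT.
Qed.
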